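(* Let $(X,Y,\phi)$ be an $L$-context and let $X'\subseteq X$, $Y'\subseteq Y$. Then: (1) $\mathcal{K}\phi_{X,Y'}\subseteq\mathcal{K}\phi$ (so that the map $\mathcal{K}\phi\to\mathcal{K}\phi_{X,Y'}$, $\mu\mapsto(\phi_{X,Y'})^\forall(\phi_{X,Y'})^\exists\mu$, has the inclusion $\mathcal{K}\phi_{X,Y'}\hookrightarrow\mathcal{K}\phi$ as its right adjoint). (2) For every $\mu\in\mathcal{K}\phi$ one has $\mu_{X'}\in\mathcal{K}\phi_{X',Y}$; the map $\mathcal{K}\phi_{X',Y}\to\mathcal{K}\phi$, $\mu'\mapsto\phi^\forall\phi^\exists\underline{\mu'}$, is $L$-isometric, i.e. $L^{X'}(\mu',\mu'')=L^X(\phi^\forall\phi^\exists\underline{\mu'},\phi^\forall\phi^\exists\underline{\mu''})$ for all $\mu',\mu''\in\mathcal{K}\phi_{X',Y}$; and its right adjoint is the restriction map $\mathcal{K}\phi\to\mathcal{K}\phi_{X',Y}$, $\mu\mapsto\mu_{X'}$.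
   Context: $L=(L,* )$ is a complete residuated lattice: a complete lattice with bottom $0$ and top $1$, equipped with a commutative associative operation $*$ with unit $1$ satisfying $a*\bigvee_i b_i=\bigvee_i a*b_i$; $\to$ is its residuum ($a*b\le c\iff a\le b\to c$). An $L$-context is a triple $(X,Y,\phi)$ with $X,Y$ sets and $\phi\colon X\times Y\to L$. $L^X$ denotes the set of maps $X\to L$, carrying the $L$-valued order $L^X(\mu,\mu')=\bigwedge_{x\in X}(\mu(x)\to\mu'(x))$. Define $\phi^\exists\colon L^X\to L^Y$, $(\phi^\exists\mu)(y)=\bigvee_{x\in X}\mu(x)*\phi(x,y)$, and $\phi^\forall\colon L^Y\to L^X$, $(\phi^\forall\lambda)(x)=\bigwedge_{y\in Y}(\phi(x,y)\to\lambda(y))$. The property oriented concept $L$-lattice is $\mathcal{K}\phi=\{\mu\in L^X\mid \phi^\forall\phi^\exists\mu=\mu\}$ with the $L$-order inherited from $L^X$. For $X'\subseteq X$, $Y'\subseteq Y$, $\phi_{X',Y'}$ denotes the restriction of $\phi$ to $X'\times Y'$; for $\mu\in L^X$, $\mu_{X'}$ is its restriction to $X'$; for $\mu'\in L^{X'}$, $\underline{\mu'}\in L^X$ is its extension by $0$ (equal to $\mu'(x)$ for $x\in X'$ and $0$ otherwise). A map $f$ between $L$-ordered sets $P,Q$ is $L$-isometric if $P(p,p')=Q(fp,fp')$; monotone maps $f\colon P\to Q$, $g\colon Q\to P$ are adjoint ($f\dashv g$) if $Q(fp,q)=P(p,gq)$ for all $p,q$. *)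

(* Defs.v *)
(* A complete residuated lattice (L, *, ->): a partial order with arbitrary
   suprema (of subsets of L, i.e. predicates), a commutative associative
   multiplication with unit the top element 1, distributing over arbitrary
   joins, and its residuum. *)
Record CRL : Type := {
  car :> Type;
  le : car -> car -> Prop;
  sup : (car -> Prop) -> car;
  mul : car -> car -> car;
  res : car -> car -> car;
  le_refl : forall a, le a a;
  le_trans : forall a b c, le a b -> le b c -> le a c;
  le_antisym : forall a b, le a b -> le b a -> a = b;
  sup_ub : forall (P : car -> Prop) a, P a -> le a (sup P);
  sup_least : forall (P : car -> Prop) b, (forall a, P a -> le a b) -> le (sup P) b;
  mulC : forall a b, mul a b = mul b a;
  mulA : forall a b c, mul a (mul b c) = mul (mul a b) c;
  mul1 : forall a, mul (sup (fun _ => True)) a = a;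
  mul_sup : forall a (P : car -> Prop),
      mul a (sup P) = sup (fun c => exists b, P b /\ c = mul a b);
  resP : forall a b c, le (mul a b) c <-> le a (res b c)
}.

Section Ops.
Context {L : CRL}.

Definition inf (P : L -> Prop) : L := sup L (fun a => forall b, P b -> le L a b).
Definition bot : L := sup L (fun _ => False).
Definition top : L := sup L (fun _ => True).

Definition isup {I : Type} (f : I -> L) : L := sup L (fun l => exists i, l = f i).
Definition iinf {I : Type} (f : I -> L) : L := inf (fun l => exists i, l = f i).

(* the L-valued order on L^X *)
Definition Lhom {X : Type} (mu mu' : X -> L) : L := iinf (fun x => res L (mu x) (mu' x)).

Context {X Y : Type}.

Definition phiE (phi : X -> Y -> L) (mu : X -> L) : Y -> L :=
  fun y => isup (fun x => mul L (mu x) (phi x y)).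
Definition phiA (phi : X -> Y -> L) (lam : Y -> L) : X -> L :=
  fun x => iinf (fun y => res L (phi x y) (lam y)).

(* mu belongs to the property oriented concept L-lattice K phi *)
Definition inK (phi : X -> Y -> L) (mu : X -> L) : Prop := phiA phi (phiE phi mu) = mu.

Definition clo (phi : X -> Y -> L) (mu : X -> L) : X -> L := phiA phi (phiE phi mu).
End Ops.

(* subsets are boolean predicates; the corresponding subtype *)
Definition subT {X : Type} (P : X -> bool) : Type := {x : X | P x = true}.

Definition restrX {L : CRL} {X Y : Type} (phi : X -> Y -> L) (X' : X -> bool)
  : subT X' -> Y -> L := fun x y => phi (proj1_sig x) y.
Definition restrY {L : CRL} {X Y : Type} (phi : X -> Y -> L) (Y' : Y -> bool)
  : X -> subT Y' -> L := fun x y => phi x (proj1_sig y).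

Definition restr {L : CRL} {X : Type} (X' : X -> bool) (mu : X -> L) : subT X' -> L :=
  fun x => mu (proj1_sig x).

Definition ext0 {L : CRL} {X : Type} (X' : X -> bool) (mu' : subT X' -> L) : X -> L :=
  fun x => (if X' x as b return X' x = b -> L
            then fun h => mu' (exist _ x h)
            else fun _ => @bot L) eq_refl.

(* Main.v *)
Require Import Defs.
From Stdlib Require Import Setoid FunctionalExtensionality Eqdep_dec Bool.

Section Lat.
Context {L : CRL}.
Local Notation "a <= b" := (le L a b).
Local Notation "a * b" := (mul L a b).

Lemma inf_lb (P : L -> Prop) b : P b -> inf P <= b.
Proof. intros Hb. apply sup_least. intros a Ha. now apply Ha. Qed.
Lemma inf_glb (P : L -> Prop) a : (forall b, P b -> a <= b) -> a <= inf P.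
Proof. intros H. now apply sup_ub. Qed.
Lemma iinf_lb {I} (f : I -> L) i : iinf f <= f i.
Proof. apply inf_lb. eauto. Qed.
Lemma le_iinf {I} (f : I -> L) a : a <= iinf f <-> forall i, a <= f i.
Proof. split.
 - intros H i. eapply le_trans; [exact H| apply iinf_lb].
 - intros H. apply inf_glb. intros b [i ->]. apply H. Qed.
Lemma isup_ub {I} (f : I -> L) i : f i <= isup f.
Proof. apply sup_ub. eauto. Qed.
Lemma isup_le {I} (f : I -> L) a : (forall i, f i <= a) -> isup f <= a.
Proof. intros H. apply sup_least. intros b [i ->]. apply H. Qed.

Lemma le_ext (u v : L) : (forall a, a <= u <-> a <= v) -> u = v.
Proof. intros H. apply le_antisym; [apply H|apply H]; apply le_refl. Qed.

Lemma mul_mono a b c : b <= c -> a * b <= a * c.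
Proof.
  intros H.
  assert (E : c = sup L (fun z => z = b \/ z = c)).
  { apply le_antisym. apply sup_ub; auto. apply sup_least. intros z [->| ->]; auto using le_refl. }
  rewrite E, mul_sup. apply sup_ub. exists b. auto.
Qed.
Lemma mul_mono_l a b c : b <= c -> b * a <= c * a.
Proof. intros H. rewrite (mulC L b), (mulC L c). now apply mul_mono. Qed.

Lemma mul_bot a : a * bot = bot.
Proof. unfold bot. rewrite mul_sup. apply le_antisym; apply sup_least.
 - intros c [b [[] _]].
 - intros _ []. Qed.

Lemma bot_le a : bot <= a.
Proof. apply sup_least. intros _ []. Qed.

Lemma res_eval a b : res L a b * a <= b.
Proof. apply resP. apply le_refl. Qed.

Lemma le_res a b c : a <= res L b c <-> a * b <= c.
Proof. split; apply resP. Qed.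
End Lat.
Section Ctx.
Context {L : CRL}.
Local Notation "a <= b" := (le L a b).
Local Notation "a * b" := (mul L a b).

Lemma le_Lhom {X} (mu nu : X -> L) a : a <= Lhom mu nu <-> forall x, a * mu x <= nu x.
Proof. unfold Lhom. rewrite le_iinf. split; intros H x; apply le_res, H. Qed.

Context {X Y : Type}.

Lemma adj (phi : X -> Y -> L) mu lam :
  (forall y, phiE phi mu y <= lam y) <-> (forall x, mu x <= phiA phi lam x).
Proof. split.
 - intros H x. unfold phiA. apply le_iinf. intros y. apply le_res.
   eapply le_trans; [|apply H]. unfold phiE. apply (isup_ub (fun x => mu x * phi x y)).
 - intros H y. unfold phiE. apply isup_le. intros x.
   eapply le_trans. apply mul_mono_l, H. unfold phiA.
   apply le_res. apply (iinf_lb (fun y => res L (phi x y) (lam y))). Qed.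

Lemma phiE_mono (phi : X -> Y -> L) (m m' : X -> L) : (forall x, m x <= m' x) -> forall y, phiE phi m y <= phiE phi m' y.
Proof. intros H y. apply isup_le. intros x. eapply le_trans; [apply mul_mono_l, H|].
 apply (isup_ub (fun x => m' x * phi x y)). Qed.
Lemma phiA_mono (phi : X -> Y -> L) l l' : (forall y, l y <= l' y) -> forall x, phiA phi l x <= phiA phi l' x.
Proof. intros H x. apply le_iinf. intros y. eapply le_trans; [apply (iinf_lb (fun y => res L (phi x y) (l y)) y)|].
 apply le_res. eapply le_trans; [apply res_eval|apply H]. Qed.

Lemma clo_ext (phi : X -> Y -> L) (m : X -> L) x : m x <= clo phi m x.
Proof. revert x. apply adj. intros; apply le_refl. Qed.
Lemma clo_mono (phi : X -> Y -> L) (m m' : X -> L) : (forall x, m x <= m' x) -> forall x, clo phi m x <= clo phi m' x.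
Proof. intros H. apply phiA_mono, phiE_mono, H. Qed.
Lemma clo_inK (phi : X -> Y -> L) (m : X -> L) : inK phi (clo phi m).
Proof. unfold inK. extensionality x. apply le_antisym; [|apply clo_ext].
 apply phiA_mono. apply adj. intros; apply le_refl. Qed.

Lemma strength (phi : X -> Y -> L) (m : X -> L) a x : a * clo phi m x <= clo phi (fun z => a * m z) x.
Proof. unfold clo, phiA. apply le_iinf. intros y. apply le_res.
 rewrite <- mulA. eapply le_trans. apply mul_mono.
 eapply le_trans. apply mul_mono_l. apply (iinf_lb (fun y => res L (phi x y) (phiE phi m y)) y). apply res_eval.
 unfold phiE, isup. rewrite mul_sup. apply sup_least. intros c [b [[z ->] ->]].
 rewrite mulA. apply (isup_ub (fun z => (a * m z) * phi z y)). Qed.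

Lemma Lhom_clo (phi : X -> Y -> L) (m n : X -> L) : inK phi n -> Lhom (clo phi m) n = Lhom m n.
Proof. intros Hn. apply le_ext. intros a. rewrite !le_Lhom. split; intros H x.
 - eapply le_trans; [apply mul_mono, clo_ext|apply H].
 - eapply le_trans; [apply strength|]. rewrite <- Hn. apply clo_mono. exact H. Qed.
End Ctx.
Section R.
Context {L : CRL} {X Y : Type}.
Local Notation "a <= b" := (le L a b).
Local Notation "a * b" := (mul L a b).

Lemma ext0_true (X' : X -> bool) (mu' : subT X' -> L) x (h : X' x = true) :
  ext0 X' mu' x = mu' (exist _ x h).
Proof. unfold ext0. generalize (@eq_refl bool (X' x)).
 generalize (X' x) at 2 3. intros b e. destruct b.
 - f_equal. f_equal. apply UIP_dec, bool_dec.
 - congruence. Qed.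
Lemma ext0_false (X' : X -> bool) (mu' : subT X' -> L) x (h : X' x = false) :
  ext0 X' mu' x = bot.
Proof. unfold ext0. generalize (@eq_refl bool (X' x)).
 generalize (X' x) at 2 3. intros b e. destruct b; congruence. Qed.

Lemma phiE_ext0 (phi : X -> Y -> L) X' mu' y :
  phiE phi (ext0 X' mu') y = phiE (restrX phi X') mu' y.
Proof. apply le_antisym.
 - apply isup_le. intros z. destruct (X' z) eqn:E.
   + rewrite (ext0_true _ _ _ E). apply (isup_ub (fun z => mu' z * restrX phi X' z y) (exist _ z E)).
   + rewrite (ext0_false _ _ _ E), mulC, mul_bot. apply bot_le.
 - apply isup_le. intros [z h]. unfold restrX; simpl.
   rewrite <- (ext0_true X' mu' z h). apply (isup_ub (fun z => ext0 X' mu' z * phi z y)). Qed.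

Lemma clo_ext0 (phi : X -> Y -> L) X' mu' x h :
  clo phi (ext0 X' mu') x = clo (restrX phi X') mu' (exist _ x h).
Proof. unfold clo, phiA. f_equal. extensionality y. rewrite phiE_ext0. reflexivity. Qed.
End R.
Theorem mainTheorem1 (L : CRL) (X Y : Type) (phi : X -> Y -> L)
    (X' : X -> bool) (Y' : Y -> bool) :
  (* (1) *)
  ((forall mu : X -> L, inK (restrY phi Y') mu -> inK phi mu) /\
   (forall mu : X -> L, inK phi mu -> inK (restrY phi Y') (clo (restrY phi Y') mu)) /\
   (forall mu nu : X -> L, inK phi mu -> inK (restrY phi Y') nu ->
      Lhom (clo (restrY phi Y') mu) nu = Lhom mu nu)) /\
  (* (2) *)
  ((forall mu : X -> L, inK phi mu -> inK (restrX phi X') (restr X' mu)) /\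
   (forall mu' : subT X' -> L, inK (restrX phi X') mu' -> inK phi (clo phi (ext0 X' mu'))) /\
   (forall mu' mu'' : subT X' -> L, inK (restrX phi X') mu' -> inK (restrX phi X') mu'' ->
      Lhom mu' mu'' = Lhom (clo phi (ext0 X' mu')) (clo phi (ext0 X' mu''))) /\
   (forall (mu' : subT X' -> L) (mu : X -> L), inK (restrX phi X') mu' -> inK phi mu ->
      Lhom (clo phi (ext0 X' mu')) mu = Lhom mu' (restr X' mu))).
Proof.
split; [split; [|split]|split; [|split; [|split]]].
- intros mu H. unfold inK. extensionality x. apply le_antisym; [|apply (clo_ext phi mu x)].
  apply (le_trans _ _ (phiA (restrY phi Y') (phiE (restrY phi Y') mu) x)); [|rewrite H; apply le_refl].
  unfold phiA. apply le_iinf. intros [y h].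
  apply (iinf_lb (fun y => res L (phi x y) (phiE phi mu y)) y).
- intros mu _. apply clo_inK.
- intros mu nu _ Hn. now apply Lhom_clo.
- intros mu H. unfold inK. extensionality x. apply le_antisym; [|apply (clo_ext _ _ x)].
  destruct x as [x h].
  change (le L (phiA phi (phiE (restrX phi X') (restr X' mu)) x) (mu x)).
  apply (le_trans _ _ (phiA phi (phiE phi mu) x)); [|rewrite H; apply le_refl].
  apply phiA_mono. intros y. apply isup_le. intros [z hz].
  apply (isup_ub (fun z => mul L (mu z) (phi z y)) z).
- intros mu' _. apply clo_inK.
- intros mu' mu'' H1 H2. assert (H2' : clo (restrX phi X') mu'' = mu'') by exact H2. clear H2. rename H2' into H2. rewrite Lhom_clo by apply clo_inK.
  apply le_ext. intros a. rewrite !le_Lhom. split; intros H x.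
  + destruct (X' x) eqn:E.
    * rewrite (ext0_true _ _ _ E), (clo_ext0 _ _ _ _ E), H2. apply H.
    * rewrite (ext0_false _ _ _ E), mul_bot. apply bot_le.
  + destruct x as [x h]. specialize (H x).
    rewrite (ext0_true _ _ _ h), (clo_ext0 _ _ _ _ h), H2 in H. exact H.
- intros mu' mu H1 H. rewrite Lhom_clo by exact H.
  apply le_ext. intros a. rewrite !le_Lhom. split; intros H' x.
  + destruct x as [x h]. specialize (H' x). rewrite (ext0_true _ _ _ h) in H'. exact H'.
  + destruct (X' x) eqn:E.
    * rewrite (ext0_true _ _ _ E). apply (H' (exist _ x E)).
    * rewrite (ext0_false _ _ _ E), mul_bot. apply bot_le.
Qed.
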